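(* Let $\mathcal{H}$ be a separable Hilbert space and $\{f_n\}_{n=1}^\infty$ a sequence in $\mathcal{H}$. Then $\{f_n\}$ is a near-Riesz basis for $\mathcal{H}$ if and only if it is simultaneously a frame for $\mathcal{H}$ and a pseudo-Riesz sequence.
   Context: A frame $\{f_n\}$ for $\mathcal{H}$ is a near-Riesz basis if there is a finite set $\sigma\subseteq\mathbb{N}$ such that $\{f_n\}_{n\notin\sigma}$ is a Riesz basis for $\mathcal{H}$. A Bessel sequence is a pseudo-Riesz sequence if it can be transformed into a Riesz sequence by removing a finite number of appropriate vectors from it. *)

(* Defs.v *)
From HB Require Import structures.
From mathcomp Require Import all_boot all_order all_algebra.
From mathcomp Require Import all_classical all_reals.
From mathcomp Require Import ereal sequences.
From mathcomp Require Import complex.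
Set Implicit Arguments. Unset Strict Implicit. Unset Printing Implicit Defensive.
Import Order.TTheory GRing.Theory Num.Theory.
Local Open Scope ring_scope.

Section Hilbert.
Variable R : realType.
Local Notation C := (complex R).
Variable V : lmodType C.
Variable ip : V -> V -> C.

Definition inner_product_axioms : Prop :=
  [/\ forall (a : C) (x y z : V), ip (a *: x + y) z = a * ip x z + ip y z,
      forall x y : V, ip y x = conjc (ip x y),
      forall x : V, 0 <= ip x x
    & forall x : V, ip x x = 0 -> x = 0].

Definition hnorm (x : V) : R := Num.sqrt (complex.Re (ip x x)).

Definition hcomplete : Prop :=
  forall u : nat -> V,
    (forall e : R, 0 < e -> exists N : nat, forall m n : nat,
        (N <= m)%N -> (N <= n)%N -> hnorm (u m - u n) < e) ->
    exists x : V, forall e : R, 0 < e -> exists N : nat, forall n : nat,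
        (N <= n)%N -> hnorm (u n - x) < e.

Definition hilbert_space : Prop := inner_product_axioms /\ hcomplete.

Definition hseparable : Prop :=
  exists d : nat -> V, forall (x : V) (e : R), 0 < e ->
    exists n : nat, hnorm (x - d n) < e.

Definition sqmod (z : C) : R := Normc.normc z ^+ 2.

Definition frame_sum (f : nat -> V) (x : V) : \bar R :=
  (\sum_(n <oo) (sqmod (ip x (f n)))%:E)%E.

Definition bessel_seq (f : nat -> V) : Prop :=
  exists B : R, 0 < B /\
    forall x : V, (frame_sum f x <= (B * hnorm x ^+ 2)%:E)%E.

Definition frame (f : nat -> V) : Prop :=
  exists A B : R, [/\ 0 < A, 0 < B &
    forall x : V, ((A * hnorm x ^+ 2)%:E <= frame_sum f x)%E /\
                  (frame_sum f x <= (B * hnorm x ^+ 2)%:E)%E].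

Definition riesz_seq_on (P : pred nat) (f : nat -> V) : Prop :=
  exists A B : R, [/\ 0 < A, 0 < B &
    forall (N : nat) (c : nat -> C),
      A * (\sum_(n < N | P n) sqmod (c n))
        <= hnorm (\sum_(n < N | P n) c n *: f n) ^+ 2 /\
      hnorm (\sum_(n < N | P n) c n *: f n) ^+ 2
        <= B * (\sum_(n < N | P n) sqmod (c n))].

Definition complete_on (P : pred nat) (f : nat -> V) : Prop :=
  forall (x : V) (e : R), 0 < e ->
    exists (N : nat) (c : nat -> C),
      hnorm (x - \sum_(n < N | P n) c n *: f n) < e.

Definition riesz_basis_on (P : pred nat) (f : nat -> V) : Prop :=
  riesz_seq_on P f /\ complete_on P f.

Definition riesz_basis (f : nat -> V) : Prop := riesz_basis_on predT f.

Definition near_riesz_basis (f : nat -> V) : Prop :=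
  frame f /\ exists sigma : seq nat,
    riesz_basis_on (fun n => n \notin sigma) f.

Definition pseudo_riesz_seq (f : nat -> V) : Prop :=
  bessel_seq f /\ exists sigma : seq nat,
    riesz_seq_on (fun n => n \notin sigma) f.

End Hilbert.

(* Main.v *)
Require Import Defs.
From HB Require Import structures.
From mathcomp Require Import all_boot all_order all_algebra.
From mathcomp Require Import all_classical all_reals.
From mathcomp Require Import ereal sequences.
From mathcomp Require Import complex.
From mathcomp Require Import ring lra.
Set Implicit Arguments. Unset Strict Implicit. Unset Printing Implicit Defensive.
Import Order.TTheory GRing.Theory Num.Theory.
Local Open Scope ring_scope.
Local Open Scope complex_scope.

Lemma zm_id (G : zmodType) (x u v w : G) : x = x - (u + v) + (u + w) + (v - w).
Proof.
by rewrite opprD !addrA (addrAC _ (-v) u) addrNK (addrAC _ w v) addrNK addrK.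
Qed.

Section Basic.
Variable R : realType.
Local Notation C := (complex R).
Variable V : lmodType C.
Variable ip : V -> V -> C.
Hypothesis Hip : inner_product_axioms ip.

Definition nsq (x : V) : R := complex.Re (ip x x).

Lemma ipDl a x y z : ip (a *: x + y) z = a * ip x z + ip y z.
Proof. by case: Hip. Qed.
Lemma ipC x y : ip y x = conjc (ip x y).
Proof. by case: Hip. Qed.
Lemma ip_ge0 x : 0 <= ip x x.
Proof. by case: Hip. Qed.

Lemma ip0l z : ip 0 z = 0.
Proof.
have H := ipDl 1 0 0 z; rewrite scaler0 addr0 mul1r in H.
by move: H; rewrite -{1}(addr0 (ip 0 z)) => /addrI.
Qed.
Lemma ipZl a x z : ip (a *: x) z = a * ip x z.
Proof. by have := ipDl a x 0 z; rewrite addr0 ip0l addr0. Qed.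
Lemma ipDl' x y z : ip (x + y) z = ip x z + ip y z.
Proof. by have := ipDl 1 x y z; rewrite scale1r mul1r. Qed.
Lemma ipNl x z : ip (- x) z = - ip x z.
Proof. by rewrite -scaleN1r ipZl mulN1r. Qed.
Lemma ipBl x y z : ip (x - y) z = ip x z - ip y z.
Proof. by rewrite ipDl' ipNl. Qed.
Lemma cjD (a b : C) : conjc (a + b) = conjc a + conjc b.
Proof. by case: a; case: b => ? ? ? ? /=; apply/eqP; rewrite eq_complex /= opprD !eqxx. Qed.
Lemma cjN (a : C) : conjc (- a) = - conjc a.
Proof. by case: a. Qed.
Lemma cjM (a b : C) : conjc (a * b) = conjc a * conjc b.
Proof. by case: a; case: b => ? ? ? ? /=; apply/eqP; rewrite eq_complex /=; apply/andP; split; apply/eqP; ring. Qed.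
Lemma ipDr x y z : ip z (x + y) = ip z x + ip z y.
Proof. by rewrite ipC ipDl' cjD -(ipC x z) -(ipC y z). Qed.
Lemma ipZr a x z : ip z (a *: x) = conjc a * ip z x.
Proof. by rewrite ipC ipZl cjM -(ipC x z). Qed.
Lemma ipNr x z : ip z (- x) = - ip z x.
Proof. by rewrite ipC ipNl cjN -(ipC x z). Qed.
Lemma ipBr x y z : ip z (x - y) = ip z x - ip z y.
Proof. by rewrite ipDr ipNr. Qed.
Lemma ip0r z : ip z 0 = 0.
Proof. by rewrite ipC ip0l; apply/eqP; rewrite eq_complex /= oppr0 !eqxx. Qed.
Lemma ip_sumr (I : Type) (r : seq I) (P : pred I) (F : I -> V) z :
  ip z (\sum_(i <- r | P i) F i) = \sum_(i <- r | P i) ip z (F i).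
Proof.
elim/big_rec2: _ => [|i y1 y2 _ <-]; first by rewrite ip0r.
by rewrite ipDr.
Qed.

Lemma nsq_ge0 x : 0 <= nsq x.
Proof. by have := ip_ge0 x; rewrite lecE /= => /andP[_]. Qed.
Lemma ipxx x : ip x x = (nsq x)%:C.
Proof.
have := ip_ge0 x; rewrite lecE /= => /andP[/eqP H _].
by rewrite /nsq; case: (ip x x) H => a b /= ->.
Qed.
Lemma hnorm2 x : hnorm ip x ^+ 2 = nsq x.
Proof. by rewrite /hnorm sqr_sqrtr // nsq_ge0. Qed.
Lemma nsq0 x : nsq x = 0 -> x = 0.
Proof. by move=> H; case: Hip => _ _ _; apply; rewrite ipxx H. Qed.

Lemma sqmodE (z : C) : sqmod z = complex.Re z ^+ 2 + complex.Im z ^+ 2.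
Proof.
rewrite /sqmod; case: z => a b /=.
by rewrite sqr_sqrtr // addr_ge0 // sqr_ge0.
Qed.
Lemma sqmod_ge0 (z : C) : 0 <= sqmod z.
Proof. by rewrite /sqmod sqr_ge0. Qed.
Lemma mulcJ (z : C) : z * conjc z = (sqmod z)%:C.
Proof.
rewrite sqmodE; case: z => a b /=.
apply/eqP; rewrite eq_complex /=; apply/andP; split; apply/eqP.
  by rewrite !expr2; ring.
by ring.
Qed.
Lemma sqmodM (a b : C) : sqmod (a * b) = sqmod a * sqmod b.
Proof. by rewrite /sqmod Normc.normcM exprMn. Qed.
Lemma sqmodJ (a : C) : sqmod (conjc a) = sqmod a.
Proof. by rewrite !sqmodE; case: a => a b /=; rewrite sqrrN. Qed.

Lemma nsqZ a x : nsq (a *: x) = sqmod a * nsq x.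
Proof.
rewrite /nsq ipZl ipZr mulrA mulcJ ipxx.
by rewrite -rmorphM.
Qed.
Lemma nsqN x : nsq (- x) = nsq x.
Proof. by rewrite /nsq ipNl ipNr opprK. Qed.

Lemma ReD (a b : C) : complex.Re (a + b) = complex.Re a + complex.Re b.
Proof. by case: a; case: b. Qed.
Lemma ReN (a : C) : complex.Re (- a) = - complex.Re a.
Proof. by case: a. Qed.
Lemma ReJ (a : C) : complex.Re (conjc a) = complex.Re a.
Proof. by case: a. Qed.

Lemma nsqD x y : nsq (x + y) = nsq x + nsq y + 2 * complex.Re (ip x y).
Proof.
rewrite /nsq ipDl' !ipDr !ReD (ipC y x) ReJ; ring.
Qed.
Lemma nsqB x y : nsq (x - y) = nsq x + nsq y - 2 * complex.Re (ip x y).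
Proof. by rewrite nsqD nsqN ipNr ReN; ring. Qed.
Lemma nsqD_le x y : nsq (x + y) <= 2 * nsq x + 2 * nsq y.
Proof.
have := nsq_ge0 (x - y); rewrite nsqB nsqD => H.
lra.
Qed.

Section Comb.
Variable f : nat -> V.

Definition comb (P : pred nat) N (c : nat -> C) : V := \sum_(n < N | P n) c n *: f n.
Definition sq (P : pred nat) N (c : nat -> C) : R := \sum_(n < N | P n) sqmod (c n).
Definition approx P v := forall d : R, 0 < d -> exists N c, nsq (v - comb P N c) < d.

Definition addp (m : nat) (P : pred nat) : pred nat := fun n => (n == m) || P n.

Lemma sum_predU1 (M : nmodType) (P : pred nat) m N (g : nat -> M) : ~~ P m ->
  \sum_(n < N | addp m P n) g n =
  \sum_(n < N | P n) g n + (if (m < N)%N then g m else 0).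
Proof.
move=> Pm; case: ifP => mN.
  rewrite (bigD1 (Ordinal mN)) /=; last by rewrite /addp eqxx.
  rewrite [RHS]addrC; congr (_ + _).
  apply: eq_bigl => i /=; rewrite /addp -val_eqE /=.
  by case: (eqVneq (val i) m) => [->|]; rewrite ?(negbTE Pm) ?andbF ?andbT.
rewrite addr0; apply: eq_bigl => i /=; rewrite /addp.
by case: (eqVneq (val i) m) => // eim; move: (ltn_ord i); rewrite eim mN.
Qed.

Lemma comb_widen P N M c : (N <= M)%N ->
  comb P N c = comb P M (fun n => if (n < N)%N then c n else 0).
Proof.
move=> NM; rewrite /comb (@big_ord_widen_cond _ _ _ N M P (fun n => c n *: f n) NM) big_mkcondr /=.
apply: eq_bigr => i _; by case: ifP; rewrite ?scale0r.
Qed.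

Lemma comb_add P N1 c1 N2 c2 :
  comb P N1 c1 + comb P N2 c2 = comb P (maxn N1 N2)
    (fun n => (if (n < N1)%N then c1 n else 0) + (if (n < N2)%N then c2 n else 0)).
Proof.
rewrite (comb_widen P c1 (leq_maxl N1 N2)) (comb_widen P c2 (leq_maxr N1 N2)).
by rewrite /comb -big_split /=; apply: eq_bigr => i _; rewrite scalerDl.
Qed.

Lemma comb_scale P N c a : a *: comb P N c = comb P N (fun n => a * c n).
Proof. by rewrite /comb scaler_sumr; apply: eq_bigr => i _; rewrite scalerA. Qed.

Lemma comb_opp P N c : - comb P N c = comb P N (fun n => - c n).
Proof. by rewrite /comb -sumrN; apply: eq_bigr => i _; rewrite scaleNr. Qed.

Lemma comb_mono (P Q : pred nat) N c : (forall n, P n -> Q n) ->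
  comb P N c = comb Q N (fun n => if P n then c n else 0).
Proof.
move=> PQ; rewrite /comb big_mkcond [RHS]big_mkcond; apply: eq_bigr => i _.
by case: (boolP (P i)) => Pi; [rewrite (PQ _ Pi) | case: (Q i); rewrite ?scale0r].
Qed.

Lemma approx_mono (P Q : pred nat) v : (forall n, P n -> Q n) -> approx P v -> approx Q v.
Proof.
move=> PQ H d d0; have [N [c Hc]] := H d d0.
by exists N, (fun n => if P n then c n else 0); rewrite -comb_mono.
Qed.


Definition rz (P : pred nat) (A B : R) :=
  forall N c, A * sq P N c <= nsq (comb P N c) /\ nsq (comb P N c) <= B * sq P N c.

Lemma sqmod0 : sqmod (0 : C) = 0.
Proof. by rewrite sqmodE /= expr0n /= addr0. Qed.

Lemma step P m A B : 0 < A -> 0 < B -> rz P A B -> ~~ P m ->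
  (exists A' B', [/\ 0 < A', 0 < B' & rz (addp m P) A' B']) \/ approx P (f m).
Proof.
move=> A0 B0 HP Pm.
case: (pselect (exists d : R, 0 < d /\ forall N c, d <= nsq (f m - comb P N c)));
  last first.
  move=> H; right => d d0; apply: contrapT => H2; apply: H; exists d; split => // N c.
  by rewrite leNgt; apply/negP => H3; apply: H2; exists N, c.
case=> d [d0 Hd]; left.
set M := nsq (f m).
have M0 : 0 <= M by apply: nsq_ge0.
set K := 2 / A + 2 * M / (A * d) + 1 / d.
have K1 : 0 <= 2 / A by rewrite divr_ge0 // ltW.
have K2 : 0 <= 2 * M / (A * d) by rewrite divr_ge0 // ?mulr_ge0 // ltW // mulr_gt0.
have K3 : 0 < 1 / d by rewrite divr_gt0.
have K0 : 0 < K by rewrite /K; lra.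
exists (1 / K), (2 * B + 2 * M); split.
- by rewrite divr_gt0.
- by rewrite ltr_wpDr ?mulr_ge0 // mulr_gt0.
move=> N c; rewrite /comb /sq (@sum_predU1 _ P m N (fun n => c n *: f n) Pm).
rewrite (@sum_predU1 _ P m N (fun n => sqmod (c n)) Pm).
have [HS1 HS2] := HP N c; rewrite /comb /sq in HS1 HS2.
set x := \sum_(n < N | P n) c n *: f n in HS1 HS2 *.
set S := \sum_(n < N | P n) sqmod (c n) in HS1 HS2 *.
have S0 : 0 <= S by apply: sumr_ge0 => i _; apply: sqmod_ge0.
have KA : 1 / K <= A.
  rewrite ler_pdivrMr // -[X in X <= _](@divfK _ A) ?gt_eqF // mulrC ler_pM2l //.
  have : 1 / A <= 2 / A by rewrite ler_pM2r ?invr_gt0 // ler1n.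
  rewrite /K; lra.
case: ifP => mN; last first.
  rewrite !addr0; split.
    by apply: le_trans HS1; rewrite ler_wpM2r.
  by apply: (le_trans HS2); rewrite ler_wpM2r //; lra.
set a := c m.
have q0 : 0 <= sqmod a by apply: sqmod_ge0.
have H1 : sqmod a * d <= nsq (x + a *: f m).
  case: (eqVneq a 0) => [->|a0]; first by rewrite sqmod0 mul0r nsq_ge0.
  have -> : x + a *: f m = a *: (f m - comb P N (fun n => - c n / a)).
    rewrite scalerBr comb_scale addrC; congr (_ + _).
    rewrite comb_opp /comb; apply: eq_bigr => i _.
    by rewrite mulrC divfK // opprK.
  by rewrite nsqZ ler_wpM2l.
have H2 : A * S <= 2 * nsq (x + a *: f m) + 2 * (sqmod a * M).
  apply: (le_trans HS1).
  by rewrite -{1}(addrK (a *: f m) x); apply: le_trans (nsqD_le _ _) _; rewrite nsqN nsqZ.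
set s := nsq (x + a *: f m) in H1 H2 *.
have s0 : 0 <= s by apply: nsq_ge0.
split.
  rewrite mulrC -ler_pdivlMr; last by rewrite divr_gt0.
  have -> : s / (1 / K) = s * K by field; rewrite gt_eqF.
  have Hq : sqmod a <= s / d by rewrite ler_pdivlMr.
  have HS : S <= (2 * s + 2 * (sqmod a * M)) / A by rewrite ler_pdivlMr // mulrC.
  have HqM : sqmod a * M <= s / d * M by rewrite ler_wpM2r.
  have : S <= (2 * s + 2 * (s / d * M)) / A.
    apply: (le_trans HS); rewrite ler_pM2r ?invr_gt0 //.
    by rewrite lerD2l ler_pM2l.
  move=> HS'.
  have -> : s * K = (2 * s + 2 * (s / d * M)) / A + s / d.
    by rewrite /K; field; rewrite ?gt_eqF.
  by apply: lerD.
have H3 : s <= 2 * nsq x + 2 * nsq (a *: f m) by apply: nsqD_le.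
rewrite nsqZ -/M in H3.
apply: (le_trans H3).
have : nsq x <= B * S by [].
move=> HB.
nra.
Qed.

Definition rzU (P : pred nat) (B : R) := forall N c, nsq (comb P N c) <= B * sq P N c.

Lemma sum_addp_in (M : nmodType) (P : pred nat) m N (g : nat -> M) : P m ->
  \sum_(n < N | addp m P n) g n = \sum_(n < N | P n) g n.
Proof.
move=> Pm; apply: eq_bigl => i; rewrite /addp.
by case: (eqVneq (val i) m) => [->|].
Qed.

Lemma up_ext P m B : 0 <= B -> rzU P B -> rzU (addp m P) (2 * B + 2 * nsq (f m)).
Proof.
move=> B0 HP N c; have M0 := nsq_ge0 (f m).
have S0 : 0 <= sq P N c by apply: sumr_ge0 => i _; apply: sqmod_ge0.
have HB := HP N c.
case: (boolP (P m)) => Pm.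
  rewrite /comb /sq (@sum_addp_in _ P m N (fun n => c n *: f n) Pm).
  rewrite (@sum_addp_in _ P m N (fun n => sqmod (c n)) Pm).
  apply: (le_trans HB); rewrite -/(sq P N c) ler_wpM2r //; lra.
rewrite /comb /sq (@sum_predU1 _ P m N (fun n => c n *: f n) Pm).
rewrite (@sum_predU1 _ P m N (fun n => sqmod (c n)) Pm).
rewrite -/(comb P N c) -/(sq P N c).
case: ifP => mN; last first.
  rewrite !addr0; apply: (le_trans HB); rewrite ler_wpM2r //; lra.
apply: le_trans (nsqD_le _ _) _; rewrite nsqZ.
have q0 := sqmod_ge0 (c m).
nra.
Qed.

Lemma transfer Q m : approx Q (f m) -> (forall x, approx (addp m Q) x) ->
  forall x, approx Q x.
Proof.
move=> Hm Hd x d d0.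
have d4 : 0 < d / 4 by rewrite divr_gt0.
have [N [c Hc]] := Hd x _ d4.
case: (boolP (Q m)) => Qm.
  exists N, c; move: Hc.
  rewrite /comb (@sum_addp_in _ Q m N (fun n => c n *: f n) Qm) -/(comb Q N c).
  lra.
move: Hc; rewrite /comb (@sum_predU1 _ Q m N (fun n => c n *: f n) Qm) -/(comb Q N c).
case: ifP => mN; last first.
  rewrite addr0 => Hc; exists N, c; lra.
move=> Hc; set a := c m in Hc.
have q0 := sqmod_ge0 a.
have dl : 0 < d / (4 * (sqmod a + 1)) by rewrite divr_gt0 // mulr_gt0 //; lra.
have [N2 [c2 Hc2]] := Hm _ dl.
have -> : x = (x - (comb Q N c + a *: f m)) + (comb Q N c + a *: comb Q N2 c2)
  + a *: (f m - comb Q N2 c2).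
  by rewrite scalerBr; apply: zm_id.
rewrite comb_scale comb_add.
exists (maxn N N2), (fun n => (if (n < N)%N then c n else 0) + (if (n < N2)%N then a * c2 n else 0)).
rewrite (addrAC _ (a *: _)) addrK.
apply: le_lt_trans (nsqD_le _ _) _; rewrite nsqZ.
have Hq : sqmod a * nsq (f m - comb Q N2 c2) <= d / 4.
  have : sqmod a * nsq (f m - comb Q N2 c2) <= sqmod a * (d / (4 * (sqmod a + 1))).
    by rewrite ler_wpM2l // ltW.
  move=> H; apply: le_trans H _.
  have -> : sqmod a * (d / (4 * (sqmod a + 1))) = d / 4 * (sqmod a / (sqmod a + 1)).
    by field; rewrite gt_eqF //; lra.
  rewrite ler_piMr ?ltW // ltr_pdivrMr; lra.
lra.
Qed.

Lemma Re_sum (I : Type) (r : seq I) (P : pred I) (F : I -> C) :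
  complex.Re (\sum_(i <- r | P i) F i) = \sum_(i <- r | P i) complex.Re (F i).
Proof.
by elim/big_rec2: _ => [|i y1 y2 _ <-] //; rewrite ReD.
Qed.

Lemma frame_sum_le w K : (forall N, \sum_(n < N) sqmod (ip w (f n)) <= K) ->
  (frame_sum ip f w <= K%:E)%E.
Proof.
move=> HN; rewrite /frame_sum.
apply: ereal_normedtype.lime_le; first by apply: is_cvg_nneseries => n _ _; rewrite lee_fin sqmod_ge0.
apply: nearW => N; rewrite sumEFin lee_fin big_mkord; exact: HN.
Qed.

Lemma dense_frame (P : pred nat) (A B : R) : (forall n, P n) -> 0 < A -> 0 < B -> rzU P B ->
  (forall x, ((A * nsq x)%:E <= frame_sum ip f x)%E) -> forall x, approx P x.
Proof.
move=> PT A0 B0 HU HF x e e0.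
pose E : set R := (fun r : R => exists N c, r = nsq (x - comb P N c)).
have lbE : has_lbound E by exists 0 => r [N [c ->]]; apply: nsq_ge0.
have hiE : has_inf E.
  split => //; exists (nsq x), 0%N, (fun _ => 0).
  by rewrite /comb big_ord0 subr0.
set eta := A * e / (2 * B).
have eta0 : 0 < eta by rewrite divr_gt0 ?mulr_gt0.
have [r [N0 [c0 ->]] Hr] := inf_adherent eta0 hiE.
set w := x - comb P N0 c0 in Hr.
exists N0, c0; rewrite -/w.
have HS : forall N, \sum_(n < N) sqmod (ip w (f n)) <= B * eta.
  move=> N.
  set a := fun n => ip w (f n).
  set S := \sum_(n < N) sqmod (a n).
  have S0 : 0 <= S by apply: sumr_ge0 => i _; apply: sqmod_ge0.
  have HSP : sq P N a = S by rewrite /sq; apply: eq_bigl => i; rewrite PT.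
  set v := comb P N a.
  have Hv : nsq v <= B * S by rewrite -HSP; apply: HU.
  have Hwv : complex.Re (ip w v) = S.
    rewrite /v /comb ip_sumr Re_sum -HSP /sq; apply: eq_bigr => i _.
    by rewrite ipZr mulrC mulcJ.
  have Hinf : inf E <= nsq (w - ((1 / B)%:C *: v)).
    apply: ge_inf => //; rewrite /w -addrA -opprD.
    rewrite comb_scale comb_add; do 2 eexists; reflexivity.
  move: Hinf; rewrite nsqB nsqZ ipZr.
  have -> : sqmod (1 / B)%:C = (1 / B) ^+ 2 by rewrite sqmodE /= expr0n /= addr0.
  have -> : complex.Re (conjc (1 / B)%:C * ip w v) = 1 / B * complex.Re (ip w v).
    by rewrite /=; case: (ip w v) => p q /=; rewrite oppr0 mul0r subr0.
  rewrite Hwv => Hinf.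
  have H1 : (1 / B) ^+ 2 * nsq v <= 1 / B * S.
    rewrite expr2 -mulrA ler_pM2l ?divr_gt0 //.
    by rewrite div1r ler_pdivrMl.
  have H2 : 1 / B * S < eta.
    move: Hr; rewrite -/w; lra.
  have -> : S = B * (1 / B * S) by field; rewrite gt_eqF.
  by rewrite ler_pM2l // ltW.
have := le_trans (HF w) (frame_sum_le HS); rewrite lee_fin => H.
have HBe : B * eta = A * (e / 2) by rewrite /eta; field; rewrite gt_eqF.
rewrite HBe ler_pM2l // in H; lra.
Qed.

Definition outp (s : seq nat) : pred nat := fun n => n \notin s.

Lemma build (s : seq nat) : forall s0 A B, 0 < A -> 0 < B -> rz (outp s0) A B ->
  (forall x, approx (fun n => (n \notin s0) || (n \in s)) x) ->
  exists s1 A' B', [/\ 0 < A', 0 < B', rz (outp s1) A' B' &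
                     forall x, approx (outp s1) x].
Proof.
elim: s => [|m s IH] s0 A B A0 B0 HR HD.
  exists s0, A, B; split => // x.
  have -> : outp s0 = (fun n => (n \notin s0) || (n \in ([::] : seq nat))).
    by apply: funext => n; rewrite in_nil orbF.
  exact: HD.
case: (boolP (outp s0 m)) => Pm.
  apply: (IH s0 A B) => // x.
  have -> : (fun n => (n \notin s0) || (n \in s)) =
            (fun n => (n \notin s0) || (n \in m :: s)).
    apply: funext => n; rewrite in_cons.
    by case: (eqVneq n m) => [->|] //=; rewrite (Pm : m \notin s0).
  exact: HD.
have [[A' [B' [A'0 B'0 HR']]]|Hm] := step A0 B0 HR Pm.
  pose s1 := [seq k <- s0 | k != m].
  have E1 : addp m (outp s0) = outp s1.
    by apply: funext => n; rewrite /addp /outp /s1 mem_filter negb_and negbK.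
  apply: (IH s1 A' B') => //; first by rewrite -E1.
  move=> x.
  have -> : (fun n => (n \notin s1) || (n \in s)) =
            (fun n => (n \notin s0) || (n \in m :: s)).
    apply: funext => n; rewrite in_cons /s1 mem_filter negb_and negbK.
    by case: (n == m); rewrite ?orbT.
  exact: HD.
apply: (IH s0 A B) => //.
apply: (@transfer _ m).
  by apply: approx_mono Hm => n; rewrite /outp => ->.
move=> x.
have -> : addp m (fun n => (n \notin s0) || (n \in s)) =
          (fun n => (n \notin s0) || (n \in m :: s)).
  apply: funext => n; rewrite /addp in_cons.
  by case: (n == m); rewrite ?orbT.
exact: HD.
Qed.

Lemma up_list (P : pred nat) B (s : seq nat) : 0 < B -> rzU P B ->
  exists B', 0 < B' /\ rzU (fun n => P n || (n \in s)) B'.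
Proof.
elim: s => [|m s IH] B0 HU.
  exists B; split => //.
  have -> : (fun n => P n || (n \in ([::] : seq nat))) = P by apply: funext => n; rewrite orbF.
  exact: HU.
have [B1 [B10 HB1]] := IH B0 HU.
exists (2 * B1 + 2 * nsq (f m)); split.
  by rewrite ltr_wpDr ?mulr_ge0 ?nsq_ge0 // mulr_gt0.
have -> : (fun n => P n || (n \in m :: s)) = addp m (fun n => P n || (n \in s)).
  apply: funext => n; rewrite /addp in_cons.
  by case: (n == m); rewrite ?orbT.
by apply: up_ext => //; apply: ltW.
Qed.

End Comb.
End Basic.

Theorem mainTheorem7 (R : realType) (V : lmodType (complex R))
    (ip : V -> V -> complex R) :
  hilbert_space ip -> hseparable ip ->
  forall f : nat -> V,
    near_riesz_basis ip f <-> (frame ip f /\ pseudo_riesz_seq ip f).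
Proof.
move=> [Hip _] _ f; split.
  move=> [Hfr [s [Hr _]]]; split => //; split => //.
    by case: Hfr => A [B [A0 B0 HF]]; exists B; split => // x; case: (HF x).
  by exists s.
move=> [Hfr [_ [s [A [B [A0 B0 HR]]]]]]; split => //.
have HR' : rz ip f (outp s) A B.
  move=> N c; have [h1 h2] := HR N c.
  by rewrite !(hnorm2 Hip) in h1 h2; split.
have HU : rzU ip f (outp s) B by move=> N c; case: (HR' N c).
have [B1 [B10 HB1]] := @up_list _ _ _ Hip f (outp s) B s B0 HU.
case: Hfr => A1 [B2 [A10 _ HF]].
have PT : forall n, (outp s n) || (n \in s) by move=> n; rewrite /outp; case: (n \in s).
have HD := @dense_frame _ _ _ Hip f _ A1 B1 PT A10 B10 HB1.
have HD' : forall x, approx ip f (fun n => (n \notin s) || (n \in s)) x.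
  apply: HD => x; rewrite -(hnorm2 Hip); by case: (HF x).
have [s1 [A' [B' [A'0 B'0 HR1 HD1]]]] := @build _ _ _ Hip f s s A B A0 B0 HR' HD'.
exists s1; split.
  exists A', B'; split => // N c; rewrite !(hnorm2 Hip); exact: HR1.
move=> x e e0.
have e2 : 0 < e ^+ 2 by rewrite exprn_gt0.
have [N [c Hc]] := HD1 x _ e2.
exists N, c.
rewrite /hnorm -(ger0_norm (ltW e0)) -sqrtr_sqr ltr_sqrt //.
Qed.
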